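(* Let $n\ge1$, $p$ a prime, $R,S\subset E_n$, and let $\mathcal{C}=\{x\in\mathbb{Z}^n:F^{(i)}_{T^{(i)}}(x)\le0\ \forall i\in S\}$ be the $S$-adapted $p$-cone attached to a family $(T^{(i)})_{i\in S}$. Then $\mathcal{C}_{\mathsf{pHa},S}\subset\mathcal{C}$ if and only if $\mathcal{C}$ is Hasse-admissible and positive.
   Context: $E_n=\{1,\dots,n\}$, indices mod $n$; $e_i$ standard basis ($e_0=e_n$). $\delta_U^{(i)}=-1$ if $i\in U$, else $1$. $F^{(d)}_T(x)=\sum_{i=0}^{n-1}p^i\delta_T^{(d+i)}x_{d+i}$. Saturation of a submonoid $A\subset\mathbb{Z}^n$: $\{x:mx\in A\text{ for some }m\ge1\}$. $\mathsf{ha}^{(i)}_{R,S}=-\delta_S^{(i)}e_i-p\delta_R^{(i-1)}e_{i-1}$; $\mathcal{C}_{\mathsf{pHa},S}$ is the saturation of $\sum_{i\in S}\mathbb{N}\mathsf{ha}^{(i)}_{R,S}+\sum_{i\notin S}\mathbb{Z}\mathsf{ha}^{(i)}_{R,S}$. $T$ is $(R,S)$-admissible if for each $i$ with $i+1\notin S$: if $i\notin R$ exactly one of $i,i+1$ lies in $T$, if $i\in R$ both or neither lie in $T$. $T$ is $j$-positive if ($j-1\in T\iff j-1\in R$). $T$ is Hasse-admissible if it is $(R,S)$-admissible and $j$-positive for every $j\in S\setminus T$. $\mathcal{C}$ is Hasse-admissible if every $T^{(i)}$ is, and positive if every $T^{(i)}$ is $i$-positive. *)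

(* Defs.v *)
From mathcomp Require Import all_boot all_order all_algebra.
Set Implicit Arguments. Unset Strict Implicit. Unset Printing Implicit Defensive.
Import Order.TTheory GRing.Theory Num.Theory.
Local Open Scope ring_scope.

(* E_n = {1,...,n} is modelled by 'I_n via k |-> k mod n (so n corresponds to
   ordinal 0, matching e_0 = e_n).  Indices are natural numbers read mod n. *)

Section Defs.
Variable n : nat.

Definition memE (U : {set 'I_n}) (i : nat) : bool :=
  [exists k in U, val k == (i %% n)%N].

Definition delta (U : {set 'I_n}) (i : nat) : int := if memE U i then -1 else 1.

Definition xat (x : 'I_n -> int) (i : nat) : int :=
  odflt 0 (omap x (insub (i %% n)%N : option 'I_n)).

Definition predE (i : nat) : nat := (i + n - 1)%N.

Variable p : nat.

Definition Fp (d : nat) (T : {set 'I_n}) (x : 'I_n -> int) : int :=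
  \sum_(i < n) (p%:Z) ^+ i * delta T (d + i) * xat x (d + i).

Definition in_pcone (S : {set 'I_n}) (T : 'I_n -> {set 'I_n})
  (x : 'I_n -> int) : Prop :=
  forall i : 'I_n, i \in S -> Fp (val i) (T i) x <= 0.

Definition ha (R S : {set 'I_n}) (i : 'I_n) (k : 'I_n) : int :=
  (if val k == (val i %% n)%N then - delta S (val i) else 0)
  + (if val k == (predE (val i) %% n)%N
     then - (p%:Z * delta R (predE (val i))) else 0).

Definition in_haMonoid (R S : {set 'I_n}) (y : 'I_n -> int) : Prop :=
  exists c : 'I_n -> int,
    (forall i, i \in S -> 0 <= c i) /\
    (forall k, y k = \sum_(i < n) c i * ha R S i k).

Definition in_CpHa (R S : {set 'I_n}) (x : 'I_n -> int) : Prop :=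
  exists m : nat, (0 < m)%N /\ in_haMonoid R S (fun k => (m%:Z) * x k).

Definition RS_admissible (R S T : {set 'I_n}) : Prop :=
  forall i : nat, (1 <= i <= n)%N -> ~~ memE S i.+1 ->
    (~~ memE R i -> (memE T i (+) memE T i.+1)) /\
    (memE R i -> (memE T i == memE T i.+1)).

Definition j_positive (R T : {set 'I_n}) (j : nat) : Prop :=
  memE T (predE j) = memE R (predE j).

Definition Hasse_admissible (R S T : {set 'I_n}) : Prop :=
  RS_admissible R S T /\
  (forall j : 'I_n, j \in S -> j \notin T -> j_positive R T (val j)).

Definition cone_Hasse_admissible (R S : {set 'I_n}) (T : 'I_n -> {set 'I_n})
  : Prop := forall i, i \in S -> Hasse_admissible R S (T i).

Definition cone_positive (R S : {set 'I_n}) (T : 'I_n -> {set 'I_n}) : Prop :=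
  forall i, i \in S -> j_positive R (T i) (val i).

End Defs.

(* Main.v *)
Require Import Defs.
From mathcomp Require Import all_boot all_order all_algebra.
From mathcomp Require Import zify ring lra.
Require Import Defs.
Set Implicit Arguments. Unset Strict Implicit. Unset Printing Implicit Defensive.
Import Order.TTheory GRing.Theory Num.Theory.
Local Open Scope ring_scope.

Section H.
Variables (n p : nat).
Hypothesis hn : (0 < n)%N.

Lemma memE_eqmod (U : {set 'I_n}) m1 m2 : (m1 %% n = m2 %% n)%N -> memE U m1 = memE U m2.
Proof. by rewrite /memE => ->. Qed.

Lemma delta_eqmod (U : {set 'I_n}) m1 m2 : (m1 %% n = m2 %% n)%N -> delta U m1 = delta U m2.
Proof. by move=> h; rewrite /delta (memE_eqmod U h). Qed.

Lemma memE_ord (U : {set 'I_n}) (k : 'I_n) : memE U (val k) = (k \in U).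
Proof.
rewrite /memE (modn_small (ltn_ord k)); apply/idP/idP => [/existsP[k' /andP[hk /eqP e]]|hk].
  by rewrite -(val_inj e).
by apply/existsP; exists k; rewrite hk eqxx.
Qed.

Lemma xat_ext (x y : 'I_n -> int) m : (forall k, x k = y k) -> xat x m = xat y m.
Proof. by move=> h; rewrite /xat; case: (insub _) => //= k; rewrite h. Qed.

Lemma xat_add (x y : 'I_n -> int) m : xat (fun k => x k + y k) m = xat x m + xat y m.
Proof. by rewrite /xat; case: (insub _) => //= k; rewrite addr0. Qed.

Lemma xat_scale a (x : 'I_n -> int) m : xat (fun k => a * x k) m = a * xat x m.
Proof. by rewrite /xat; case: (insub _) => //=; rewrite mulr0. Qed.

Lemma xat_sum (f : 'I_n -> 'I_n -> int) m :
  xat (fun k => \sum_(i < n) f i k) m = \sum_(i < n) xat (f i) m.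
Proof. by rewrite /xat; case: (insub _) => //=; rewrite big1. Qed.

Lemma xat_point u (a : int) m :
  xat (fun k : 'I_n => if val k == (u %% n)%N then a else 0) m =
  if (m %% n == u %% n)%N then a else 0.
Proof.
rewrite /xat; case: insubP => [k _ /= ->|] //=.
by rewrite ltn_pmod.
Qed.

Lemma Fp_ext d T (x y : 'I_n -> int) : (forall k, x k = y k) -> Fp p d T x = Fp p d T y.
Proof. by move=> h; apply: eq_bigr => i _; rewrite (xat_ext _ h). Qed.

Lemma Fp_add d T (x y : 'I_n -> int) :
  Fp p d T (fun k => x k + y k) = Fp p d T x + Fp p d T y.
Proof. by rewrite /Fp -big_split; apply: eq_bigr => i _; rewrite xat_add mulrDr. Qed.

Lemma Fp_scale d T a (x : 'I_n -> int) :
  Fp p d T (fun k => a * x k) = a * Fp p d T x.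
Proof. rewrite /Fp mulr_sumr; apply: eq_bigr => i _; rewrite xat_scale; ring. Qed.

Lemma Fp_sum d T (f : 'I_n -> 'I_n -> int) :
  Fp p d T (fun k => \sum_(i < n) f i k) = \sum_(i < n) Fp p d T (f i).
Proof.
rewrite /Fp; under eq_bigr do rewrite xat_sum mulr_sumr.
exact: exchange_big.
Qed.

Lemma Fp_point d T u i0 (a : int) : (i0 < n)%N -> ((d + i0) %% n = u %% n)%N ->
  Fp p d T (fun k : 'I_n => if val k == (u %% n)%N then a else 0) =
  p%:Z ^+ i0 * delta T u * a.
Proof.
move=> hi0 he; rewrite /Fp (bigD1 (Ordinal hi0)) //= big1 ?addr0.
  by rewrite xat_point he eqxx (delta_eqmod T he).
move=> i hi; rewrite xat_point; case: eqP => [e|]; last by rewrite mulr0.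
exfalso; move/negP: hi; apply; apply/eqP/val_inj => /=.
have: (d + i == d + i0 %[mod n])%N by rewrite e he.
by rewrite eqn_modDl !modn_small // => /eqP.
Qed.


Definition ea (d j : nat) : nat := if (d <= j)%N then (j - d)%N else (j + n - d)%N.
Definition eb (d j : nat) : nat := if j == d then n.-1 else (ea d j).-1.

Lemma modn_eqn x y : (x = y \/ x = y + n \/ y = x + n)%N -> (x %% n = y %% n)%N.
Proof. by case=> [->|[->|->]]; rewrite ?modnDr. Qed.

Definition G R S T (d j : 'I_n) := Fp p (val d) T (ha p R S j).

Lemma G_expr R S T (d j : 'I_n) :
  G R S T d j = p%:Z ^+ (ea d j) * delta T j * (- delta S j)
   + p%:Z ^+ (eb d j) * delta T (predE n j) * (-(p%:Z * delta R (predE n j))).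
Proof.
case: d => d hd; case: j => j hj /=.
rewrite /G /ha (Fp_add _ _ (fun k : 'I_n => if val k == (j %% n)%N then - delta S j else 0)
  (fun k : 'I_n => if val k == (predE n j %% n)%N then -(p%:Z * delta R (predE n j)) else 0)).
rewrite (@Fp_point _ _ _ (ea d j)); last first.
- by apply: modn_eqn; rewrite /= /ea; case: ifP => h; lia.
- by rewrite /ea; case: ifP => h; lia.
rewrite (@Fp_point _ _ _ (eb d j)) //.
- by rewrite /eb /ea; case: eqP => h1; try case: ifP => h2; lia.
- by apply: modn_eqn; rewrite /= /eb /ea /predE; case: eqP => h1; try case: ifP => h2; lia.
Qed.


Lemma delta_mul (A B : {set 'I_n}) m m' :
  delta A m * delta B m' = if memE A m (+) memE B m' then -1 else 1.
Proof. by rewrite /delta; case: (memE A m); case: (memE B m'); rewrite /= ?mulrNN ?mulr1 ?mulN1r ?mul1r. Qed.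

Hypothesis hp : prime p.

Lemma G_ne R S T (d j : 'I_n) : j != d -> exists Q : int, 0 < Q /\
  G R S T d j = -(Q * (delta T j * delta S j + delta T (predE n j) * delta R (predE n j))).
Proof.
move=> hne.
have hne' : (j : nat) <> d by move=> h; move/negP: hne; apply; apply/eqP/val_inj.
have e : ea d j = (eb d j).+1.
  have := ltn_ord d; rewrite /eb /ea; case: eqP => // _; case: ifP => h; lia.
have hp0 : 0 < p%:Z by rewrite ltz_nat prime_gt0.
exists (p%:Z ^+ eb d j * p%:Z); split; first by rewrite mulr_gt0 // exprn_gt0.
rewrite G_expr e exprSr; ring.
Qed.

Lemma G_eq (R S T : {set 'I_n}) (d : 'I_n) : d \in S -> exists Q : int, 1 < Q /\
  G R S T d d = delta T d - Q * (delta T (predE n d) * delta R (predE n d)).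
Proof.
move=> hd.
have e1 : ea d d = 0%N by rewrite /ea leqnn subnn.
have e2 : eb d d = n.-1 by rewrite /eb eqxx.
have hp1 : 1 < p%:Z by rewrite ltz_nat prime_gt1.
have hq : 1 <= p%:Z ^+ n.-1 by rewrite exprn_ege1 // ltW.
exists (p%:Z ^+ n.-1 * p%:Z); split; first by nia.
have hS : delta S d = -1 by rewrite /delta memE_ord hd.
rewrite G_expr e1 e2 hS expr0; ring.
Qed.


Definition Cond (R S T : {set 'I_n}) (d j : 'I_n) : Prop :=
 [/\ j \notin S -> memE T (val j) = ~~ (memE T (predE n j) (+) memE R (predE n j)),
     j \in S -> j \notin T -> memE T (predE n j) = memE R (predE n j) &
     j = d -> memE T (predE n j) = memE R (predE n j)].

Ltac fin := repeat match goal with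
 | h : is_true true -> _ |- _ => specialize (h isT)
 | h : is_true false |- _ => discriminate h
 | h : ?a = ?a -> _ |- _ => specialize (h erefl)
 end; try done; try lia; exfalso; lia.

Lemma key (R S T : {set 'I_n}) (d j : 'I_n) : d \in S ->
  ((G R S T d j <= 0 /\ (j \notin S -> G R S T d j = 0)) <-> Cond R S T d j).
Proof.
move=> hd; rewrite /Cond; case: (eqVneq j d) => [->|hne].
  have [Q [hQ ->]] := G_eq R T hd.
  rewrite hd /delta !memE_ord.
  move: (d \in T) (memE T (predE n d)) (memE R (predE n d)) => [] [] [] /=;
  split=> [[h1 h2]|[h1 h2 h3]]; (try split) => *; fin.
have [Q [hQ ->]] := G_ne R S T hne.
rewrite !delta_mul !memE_ord.
have hne' : j = d -> False by move=> e; rewrite e eqxx in hne.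
move: (j \in S) (j \in T) (memE T (predE n j)) (memE R (predE n j)) => [] [] [] [] /=;
split=> [[h1 h2]|[h1 h2 h3]]; (try split) => *; fin.
Qed.


Lemma pred_succ_mod i : (predE n (i.+1 %% n) %% n = i %% n)%N.
Proof.
rewrite /predE.
have -> : (i.+1 %% n + n - 1 = i.+1 %% n + n.-1)%N by lia.
rewrite modnDml.
have -> : (i.+1 + n.-1 = i + n)%N by lia.
by rewrite modnDr.
Qed.

Lemma rep_ok (j : 'I_n) : exists i : nat, [/\ (1 <= i <= n)%N,
  (i %% n = predE n j %% n)%N & (i.+1 %% n = j %% n)%N].
Proof.
set r := ((j + n.-1) %% n)%N.
have hr : (r < n)%N by rewrite ltn_pmod.
have er : (r = predE n j %% n)%N.
  by rewrite /r /predE; congr (_ %% _)%N; lia.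
have ei : forall i, (i %% n = r)%N -> (i.+1 %% n = j %% n)%N.
  move=> i hi; rewrite -addn1 -modnDml hi /r modnDml.
  have -> : (j + n.-1 + 1 = j + n)%N by lia.
  by rewrite modnDr.
case: (eqVneq r 0%N) => h.
- have hn' : (n %% n = r)%N by rewrite modnn h.
  exists n; split; [lia| by rewrite hn' er| exact: ei].
- have hr' : (r %% n = r)%N by rewrite modn_small.
  exists r; split; [lia| by rewrite hr' er| exact: ei].
Qed.

Lemma comb (R S : {set 'I_n}) (T : 'I_n -> {set 'I_n}) :
  (forall d, d \in S -> forall j, Cond R S (T d) d j) <->
  cone_Hasse_admissible R S T /\ cone_positive R S T.
Proof.
split.
  move=> A; split.
    move=> d hd; split.
      move=> i hi hS.
      pose j := Ordinal (ltn_pmod i.+1 hn).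
      have ej : forall X : {set 'I_n}, memE X (val j) = memE X i.+1.
        by move=> X; apply: memE_eqmod; rewrite /= modn_mod.
      have ep : forall X : {set 'I_n}, memE X (predE n (val j)) = memE X i.
        by move=> X; apply: memE_eqmod; rewrite pred_succ_mod.
      have [c1 _ _] := A d hd j.
      have hjS : j \notin S by rewrite -memE_ord ej.
      move: (c1 hjS); rewrite !ej !ep => ->.
      by case: (memE (T d) i); case: (memE R i).
    move=> j hj hjT; have [_ c2 _] := A d hd j; exact: c2.
  move=> d hd; have [_ _ c3] := A d hd d; exact: c3.
move=> [HA HP] d hd j; split.
- move=> hjS; have [i [hi e1 e2]] := rep_ok j.
  have [HRS _] := HA d hd.
  have ei : forall X : {set 'I_n}, memE X i = memE X (predE n j) by move=> X; apply: memE_eqmod.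
  have ei1 : forall X : {set 'I_n}, memE X i.+1 = memE X j by move=> X; apply: memE_eqmod.
  have hS : ~~ memE S i.+1 by rewrite ei1 memE_ord.
  have [c1 c2] := HRS i hi hS.
  rewrite !ei !ei1 in c1 c2.
  move: c1 c2; case: (memE (T d) j); case: (memE (T d) (predE n j));
    case: (memE R (predE n j)) => //= c1 c2; (try by move: (c1 isT)); by move: (c2 isT).
- exact: (HA d hd).2.
- by move=> ->; exact: HP.
Qed.


Lemma lin (R S : {set 'I_n}) (T : 'I_n -> {set 'I_n}) :
  (forall x, in_CpHa p R S x -> in_pcone p S T x) <->
  (forall d, d \in S -> forall j,
     G R S (T d) d j <= 0 /\ (j \notin S -> G R S (T d) d j = 0)).
Proof.
split.
  move=> H d hd j.
  have g1 : G R S (T d) d j <= 0.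
    apply: (H (ha p R S j)) hd.
    exists 1%N; split => //; exists (fun i => if i == j then 1 else 0); split.
      by move=> i _; case: ifP.
    move=> k; rewrite (bigD1 j) //= eqxx mul1r big1 ?addr0 ?mul1r // => i /negbTE ->.
    by rewrite mul0r.
  split=> // hjS.
  have : Fp p (val d) (T d) (fun k => -1 * ha p R S j k) <= 0.
    apply: (H (fun k => -1 * ha p R S j k)) hd.
    exists 1%N; split => //; exists (fun i => if i == j then -1 else 0); split.
      move=> i hi; case: eqP => // e; by rewrite -e hi in hjS.
    move=> k; rewrite (bigD1 j) //= eqxx mul1r big1 ?addr0 // => i /negbTE ->.
    by rewrite mul0r.
  rewrite Fp_scale mulN1r oppr_le0 => h; apply/eqP; rewrite eq_le; apply/andP; split; [exact: g1 | exact: h].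
move=> A x [m [hm [c [hc hx]]]] d hd.
have e : m%:Z * Fp p d (T d) x = \sum_(i < n) c i * G R S (T d) d i.
  rewrite -Fp_scale.
  have -> : Fp p d (T d) (fun k => m%:Z * x k) =
            Fp p d (T d) (fun k => \sum_(i < n) c i * ha p R S i k) by apply: Fp_ext.
  rewrite (Fp_sum _ _ (fun i k => c i * ha p R S i k)).
  by apply: eq_bigr => i _; rewrite Fp_scale.
have hs : \sum_(i < n) c i * G R S (T d) d i <= 0.
  apply: (big_ind (fun v : int => v <= 0)) => //; first by move=> a b ha hb; have := lerD ha hb; rewrite addr0.
  move=> i _; have [g1 g2] := A d hd i.
  case hi: (i \in S); first exact: mulr_ge0_le0 (hc i hi) g1.
  by rewrite g2 ?hi // mulr0.
have hm' : 0 < m%:Z by rewrite ltz_nat.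
by move: hs; rewrite -e pmulr_rle0.
Qed.

Lemma main_sec (R S : {set 'I_n}) (T : 'I_n -> {set 'I_n}) :
  (forall x : 'I_n -> int, in_CpHa p R S x -> in_pcone p S T x) <->
  (cone_Hasse_admissible R S T /\ cone_positive R S T).
Proof.
split.
  move=> H; apply/(proj1 (comb R S T)) => d hd j.
  exact: (proj1 (@key R S (T d) d j hd) (proj1 (lin R S T) H d hd j)).
move=> HC; apply/(proj2 (lin R S T)) => d hd j.
exact: (proj2 (@key R S (T d) d j hd) (proj2 (comb R S T) HC d hd j)).
Qed.

End H.

Theorem mainTheorem9 (n p : nat) (hn : (1 <= n)%N) (hp : prime p)
  (R S : {set 'I_n}) (T : 'I_n -> {set 'I_n}) :
  (forall x : 'I_n -> int, in_CpHa p R S x -> in_pcone p S T x) <->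
  (cone_Hasse_admissible R S T /\ cone_positive R S T).
Proof. exact: main_sec. Qed.
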